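(* Let $(X,d)$ be a totally bounded metric space, $\emptyset\ne F\subseteq X$ with representation $(\tilde F_k)$, and let $(x_n)$ be a Cauchy sequence in $X$ with a selfmajorizing rate of metastability $\Psi$. (i) Assume $(x_n)$ is asymptotically regular w.r.t. $F$ with $\Phi^+$ a selfmajorizing rate of metastability for the asymptotic regularity. Then for all $k\in\mathbb{N}$ and $g:\mathbb{N}\to\mathbb{N}$ there exists $N\le\Omega_{k,g}(\Psi,\Phi^+)$ such that for all $i,j\in[N,N+g(N)]$: $d(x_i,x_j)\le\frac1{k+1}$ and $x_i\in AF_k$. (ii) Assume $(x_n)$ is asymptotically regular w.r.t. $F$ with $\Phi^{++}$ a rate of asymptotic regularity. Then for all $k\in\mathbb{N}$ and $g:\mathbb{N}\to\mathbb{N}$ there exists $N\le\tilde\Omega_{k,g}(\Psi,(\Phi^{++})^M)$ such that $d(x_i,x_j)\le\frac1{k+1}$ for all $i,j\in[N,N+g(N)]$ and $x_m\in AF_k$ for all $m\ge N$.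
   Context: Representation: $F=\bigcap_k\tilde F_k$, $AF_k:=\bigcap_{l\le k}\tilde F_l$. A rate of metastability for $(x_n)$ is $\Psi:\mathbb{N}\times\mathbb{N}^{\mathbb{N}}\to\mathbb{N}$ such that for all $k,g$ there is $N\le\Psi(k,g)$ with $d(x_i,x_j)\le\frac1{k+1}$ for all $i,j\in[N,N+g(N)]$. $(x_n)$ is asymptotically regular w.r.t. $F$ if for all $k$ there is $N$ with $x_m\in AF_k$ for all $m\ge N$; a rate of metastability for this is $\Phi^+:\mathbb{N}\times\mathbb{N}^{\mathbb{N}}\to\mathbb{N}$ such that for all $k,g$ there is $N\le\Phi^+(k,g)$ with $x_m\in AF_k$ for all $m\in[N,N+g(N)]$; a rate of asymptotic regularity is $\Phi^{++}:\mathbb{N}\to\mathbb{N}$ with $x_n\in AF_k$ for all $n\ge\Phi^{++}(k)$. For $f:\mathbb{N}\to\mathbb{N}$, $f^M(n):=\max\{f(i)\mid i\le n\}$. For $f,f':\mathbb{N}\to\mathbb{N}$, $f'\gtrsim f$ means: for all $n^*\ge n$, $f'(n^* )\ge f'(n)$ and $f'(n^* )\ge f(n)$. For $\Phi,\Phi^*:\mathbb{N}\times\mathbb{N}^{\mathbb{N}}\to\mathbb{N}$, $\Phi^*\gtrsim\Phi$ means: for all $k,k'\in\mathbb{N}$ and $g,g':\mathbb{N}\to\mathbb{N}$ with $k'\ge k$ and $g'\gtrsim g$, $\Phi^*(k',g')\ge\Phi^*(k,g)$ and $\Phi^*(k',g')\ge\Phi(k,g)$; $\Phi$ is selfmajorizing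 if $\Phi\gtrsim\Phi$. Given $k$ and $g$: $g^*(n):=n+g^M(n)$; $\tilde g_l(m):=g^*(\max\{l,m\})$; for $\delta:\mathbb{N}\times\mathbb{N}^{\mathbb{N}}\to\mathbb{N}$, $h_{k,g,\delta}(n):=g^*(\max\{n,\delta(k,\tilde g_n)\})$; $\Omega_{k,g}(\delta,\theta):=\max\{\delta(k,h_{k,g,\theta}),\ \theta(k,\tilde g_{\delta(k,h_{k,g,\theta})})\}$; $g_l(n):=g^M(n+l)+l$; $\tilde\Omega_{k,g}(\delta,f):=\delta(k,g_{f(k)})+f(k)$ for $f:\mathbb{N}\to\mathbb{N}$. *)

(* Defs.v *)
From Stdlib Require Import Reals Lia List.
Open Scope R_scope.

Definition is_metric {X : Type} (d : X -> X -> R) : Prop :=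
  (forall x y, 0 <= d x y) /\
  (forall x y, d x y = 0 <-> x = y) /\
  (forall x y, d x y = d y x) /\
  (forall x y z, d x z <= d x y + d y z).

Definition totally_bounded {X : Type} (d : X -> X -> R) : Prop :=
  forall eps : R, 0 < eps ->
    exists l : list X, forall x : X, exists y, In y l /\ d x y < eps.

Definition cauchy_seq {X : Type} (d : X -> X -> R) (x : nat -> X) : Prop :=
  forall eps : R, 0 < eps ->
    exists N : nat, forall i j : nat, (N <= i)%nat -> (N <= j)%nat -> d (x i) (x j) < eps.

Definition is_representation {X : Type} (F : X -> Prop) (Ft : nat -> X -> Prop) : Prop :=
  forall x, F x <-> (forall k, Ft k x).

Definition AF {X : Type} (Ft : nat -> X -> Prop) (k : nat) (x : X) : Prop :=
  forall l : nat, (l <= k)%nat -> Ft l x.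

Fixpoint fM (f : nat -> nat) (n : nat) : nat :=
  match n with
  | O => f O
  | S m => Nat.max (fM f m) (f (S m))
  end.

Definition maj_fun (f' f : nat -> nat) : Prop :=
  forall n nstar : nat, (n <= nstar)%nat -> (f' n <= f' nstar)%nat /\ (f n <= f' nstar)%nat.

Definition maj_fun2 (Phistar Phi : nat -> (nat -> nat) -> nat) : Prop :=
  forall (k k' : nat) (g g' : nat -> nat), (k <= k')%nat -> maj_fun g' g ->
    (Phistar k g <= Phistar k' g')%nat /\ (Phi k g <= Phistar k' g')%nat.

Definition selfmajorizing (Phi : nat -> (nat -> nat) -> nat) : Prop := maj_fun2 Phi Phi.

Definition metastability_rate {X : Type} (d : X -> X -> R) (x : nat -> X)
    (Psi : nat -> (nat -> nat) -> nat) : Prop :=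
  forall (k : nat) (g : nat -> nat), exists N : nat, (N <= Psi k g)%nat /\
    forall i j : nat, (N <= i <= N + g N)%nat -> (N <= j <= N + g N)%nat ->
      d (x i) (x j) <= 1 / INR (S k).

Definition asymptotically_regular {X : Type} (Ft : nat -> X -> Prop) (x : nat -> X) : Prop :=
  forall k : nat, exists N : nat, forall m : nat, (N <= m)%nat -> AF Ft k (x m).

Definition AR_metastability_rate {X : Type} (Ft : nat -> X -> Prop) (x : nat -> X)
    (Phi : nat -> (nat -> nat) -> nat) : Prop :=
  forall (k : nat) (g : nat -> nat), exists N : nat, (N <= Phi k g)%nat /\
    forall m : nat, (N <= m <= N + g N)%nat -> AF Ft k (x m).

Definition AR_rate {X : Type} (Ft : nat -> X -> Prop) (x : nat -> X) (Phi : nat -> nat) : Prop :=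
  forall k n : nat, (Phi k <= n)%nat -> AF Ft k (x n).

Definition gstar (g : nat -> nat) (n : nat) : nat := (n + fM g n)%nat.
Definition gtilde (g : nat -> nat) (l m : nat) : nat := gstar g (Nat.max l m).
Definition hfun (k : nat) (g : nat -> nat) (delta : nat -> (nat -> nat) -> nat) (n : nat) : nat :=
  gstar g (Nat.max n (delta k (gtilde g n))).
Definition Omega (k : nat) (g : nat -> nat) (delta theta : nat -> (nat -> nat) -> nat) : nat :=
  Nat.max (delta k (hfun k g theta)) (theta k (gtilde g (delta k (hfun k g theta)))).
Definition gsub (g : nat -> nat) (l n : nat) : nat := (fM g (n + l) + l)%nat.
Definition Omega_tilde (k : nat) (g : nat -> nat) (delta : nat -> (nat -> nat) -> nat)
    (f : nat -> nat) : nat := (delta k (gsub g (f k)) + f k)%nat.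

(* Main.v *)
Require Import Defs.
From Stdlib Require Import Reals Lia.
Open Scope R_scope.

Lemma fM_ge (f : nat -> nat) n : (f n <= fM f n)%nat.
Proof. destruct n; simpl; lia. Qed.

Lemma fM_mono (f : nat -> nat) n m : (n <= m)%nat -> (fM f n <= fM f m)%nat.
Proof. induction 1; simpl; lia. Qed.

Lemma gstar_mono g n m : (n <= m)%nat -> (gstar g n <= gstar g m)%nat.
Proof. intros H; unfold gstar; pose proof (fM_mono g n m H); lia. Qed.

Theorem theorem5p8 (X : Type) (d : X -> X -> R) (F : X -> Prop) (Ft : nat -> X -> Prop)
    (x : nat -> X) (Psi : nat -> (nat -> nat) -> nat) :
  is_metric d -> totally_bounded d ->
  (exists y, F y) -> is_representation F Ft ->
  cauchy_seq d x -> selfmajorizing Psi -> metastability_rate d x Psi ->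
  (forall Phip : nat -> (nat -> nat) -> nat,
     asymptotically_regular Ft x -> selfmajorizing Phip -> AR_metastability_rate Ft x Phip ->
     forall (k : nat) (g : nat -> nat), exists N : nat, (N <= Omega k g Psi Phip)%nat /\
       forall i j : nat, (N <= i <= N + g N)%nat -> (N <= j <= N + g N)%nat ->
         d (x i) (x j) <= 1 / INR (S k) /\ AF Ft k (x i))
  /\
  (forall Phipp : nat -> nat,
     asymptotically_regular Ft x -> AR_rate Ft x Phipp ->
     forall (k : nat) (g : nat -> nat), exists N : nat, (N <= Omega_tilde k g Psi (fM Phipp))%nat /\
       (forall i j : nat, (N <= i <= N + g N)%nat -> (N <= j <= N + g N)%nat ->
          d (x i) (x j) <= 1 / INR (S k)) /\
       (forall m : nat, (N <= m)%nat -> AF Ft k (x m))).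
Proof.
  intros _ _ _ _ _ _ HPsi. split.
  - intros Phi _ HPhi HAR k g.
    destruct (HPsi k (hfun k g Phi)) as [N0 [HN0 HC]].
    destruct (HAR k (gtilde g N0)) as [N1 [HN1 HA]].
    set (P := Psi k (hfun k g Phi)).
    assert (Hm : maj_fun (gtilde g P) (gtilde g N0)).
    { intros n ns Hn; unfold gtilde; split; apply gstar_mono; lia. }
    destruct (HPhi k k (gtilde g N0) (gtilde g P) (le_n k) Hm) as [H1 _].
    exists (Nat.max N0 N1). split.
    + unfold Omega. fold P. lia.
    + assert (HgN := fM_ge g (Nat.max N0 N1)).
      assert (HM := gstar_mono g (Nat.max N0 N1) (Nat.max N0 (Phi k (gtilde g N0))) ltac:(lia)).
      unfold gstar in HM.
      assert (Hg1 : (gstar g (Nat.max N0 N1) <= gtilde g N0 N1)%nat).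
      { unfold gtilde. apply gstar_mono. lia. }
      unfold gstar in Hg1.
      intros i j Hi Hj. split.
      * apply HC; unfold hfun, gstar; lia.
      * apply HA; lia.
  - intros Phi _ HAR k g.
    set (l := fM Phi k).
    destruct (HPsi k (gsub g l)) as [N0 [HN0 HC]].
    exists (N0 + l)%nat. split; [unfold Omega_tilde; fold l; lia|]. split.
    + assert (HgN := fM_ge g (N0 + l)).
      intros i j Hi Hj. apply HC; unfold gsub; lia.
    + intros m Hm. apply HAR. assert (H := fM_ge Phi k). fold l in H. lia.
Qed.
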